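(* Let $X_1,\dots,X_r$ be Banach spaces and let $\|\cdot\|_\psi$ be an absolute normalized norm on $\mathbb{R}^r$. Let $T:K\to K$ be a nonexpansive mapping on a weakly compact convex subset $K$ of $(X_1\oplus\dots\oplus X_r)_\psi$ which is minimal invariant for $T$, with $\operatorname{diam}K=1$, and let $(w_n)=((x_n^{(1)},\dots,x_n^{(r)}))$ be an approximate fixed point sequence for $T$ in $K$ converging weakly to $(0,\dots,0)\in K$ with $\lim_{n\to\infty}\|x_n^{(r)}\|=0$. Let $\varepsilon_1\in(0,1)$, let $k\ge 1$ be an integer, and let $w_{n_1}=(x_{n_1}^{(1)},\dots,x_{n_1}^{(r)})$ be a term of the sequence with $\|Tw_{n_1}-w_{n_1}\|_\psi<\varepsilon_1$ and $\|x_{n_1}^{(r)}\|<\varepsilon_1$. Define $D_1^1=\{w_{n_1}\}$ and $D_{j+1}^1=\operatorname{conv}(D_j^1\cup T(D_j^1))$ for $j=1,\dots,k-1$. Then for every $u=(y^{(1)},\dots,y^{(r)})\in D_k^1$ we have $\|y^{(r)}\|<k\varepsilon_1$.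
   Context: A norm $\|\cdot\|$ on $\mathbb{R}^r$ is absolute if $\|(x_1,\dots,x_r)\|=\|(|x_1|,\dots,|x_r|)\|$ for all $x$, and normalized if $\|e_1\|=\dots=\|e_r\|=1$ for the standard unit vectors. For Banach spaces $X_1,\dots,X_r$, the direct sum $(X_1\oplus\dots\oplus X_r)_\psi$ is $X_1\times\dots\times X_r$ with the norm $\|(x_1,\dots,x_r)\|_\psi=\|(\|x_1\|,\dots,\|x_r\|)\|_\psi$. A mapping $T$ is nonexpansive if $\|Tx-Ty\|\le\|x-y\|$. $K$ is minimal invariant for $T$ if $T(K)\subset K$ and no proper nonempty weakly compact convex subset of $K$ is $T$-invariant. A sequence $(w_n)$ in $K$ is an approximate fixed point sequence if $\|Tw_n-w_n\|\to 0$. $\operatorname{conv}$ denotes the convex hull. *)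

(* Defs.v *)
From HB Require Import structures.
From mathcomp Require Import all_boot all_order all_algebra.
From mathcomp Require Import all_classical all_reals all_analysis.
Set Implicit Arguments. Unset Strict Implicit. Unset Printing Implicit Defensive.
Import Order.TTheory GRing.Theory Num.Theory.
Import numFieldNormedType.Exports.
Local Open Scope classical_set_scope.
Local Open Scope ring_scope.

Section PsiSum.
Variable R : realType.

Definition is_norm_Rn (m : nat) (psi : ('I_m -> R) -> R) : Prop :=
  [/\ (forall x, 0 <= psi x),
      (forall x, psi x = 0 -> forall i, x i = 0),
      (forall (a : R) x, psi (fun i => a * x i) = `|a| * psi x)
    & (forall x y, psi (fun i => x i + y i) <= psi x + psi y)].

Definition absolute_norm (m : nat) (psi : ('I_m -> R) -> R) : Prop :=
  forall x, psi x = psi (fun i => `|x i|).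

Definition normalized_norm (m : nat) (psi : ('I_m -> R) -> R) : Prop :=
  forall j : 'I_m, psi (fun i => if i == j then 1 else 0) = 1.

Variable m : nat.
Variable X : 'I_m -> normedModType R.

Definition psum := forall i : 'I_m, X i.

Definition psum_add (x y : psum) : psum := fun i => x i + y i.
Definition psum_scale (a : R) (x : psum) : psum := fun i => a *: x i.
Definition psum_sub (x y : psum) : psum := fun i => x i - y i.
Definition psum_zero : psum := fun i => 0.

Variable psi : ('I_m -> R) -> R.

Definition psi_norm (x : psum) : R := psi (fun i => `|x i|).

(* continuous linear functionals on the direct sum (= bounded linear) *)
Definition is_clf (f : psum -> R) : Prop :=
  (forall (a b : R) x y,
      f (psum_add (psum_scale a x) (psum_scale b y)) = a * f x + b * f y) /\
  exists C : R, forall x, `|f x| <= C * psi_norm x.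

Definition weak_nbhd (p : psum) (fs : seq (psum -> R)) (e : R) : set psum :=
  [set x | forall f, f \in fs -> `|f x - f p| < e].

Definition weak_cluster (F : set_system psum) (p : psum) : Prop :=
  forall A fs e, F A -> (forall f, f \in fs -> is_clf f) -> 0 < e ->
    A `&` weak_nbhd p fs e !=set0.

(* compactness in the weak topology (filter characterization, as in
   MathComp-Analysis' [compact]) *)
Definition weakly_compact (K : set psum) : Prop :=
  forall F : set_system psum, ProperFilter F -> F K ->
    exists2 p, K p & weak_cluster F p.

Definition psum_convex (K : set psum) : Prop :=
  forall x y (t : R), K x -> K y -> 0 <= t -> t <= 1 ->
    K (psum_add (psum_scale t x) (psum_scale (1 - t) y)).

Definition diam_eq1 (K : set psum) : Prop :=
  (forall x y, K x -> K y -> psi_norm (psum_sub x y) <= 1) /\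
  (forall e : R, 0 < e -> exists x y, [/\ K x, K y & 1 - e < psi_norm (psum_sub x y)]).

Definition nonexpansive_on (K : set psum) (T : psum -> psum) : Prop :=
  forall x y, K x -> K y ->
    psi_norm (psum_sub (T x) (T y)) <= psi_norm (psum_sub x y).

Definition minimal_invariant (K : set psum) (T : psum -> psum) : Prop :=
  T @` K `<=` K /\
  forall L : set psum, L `<=` K -> L !=set0 -> weakly_compact L ->
    psum_convex L -> T @` L `<=` L -> L = K.

Definition weak_cvg (w : nat -> psum) (p : psum) : Prop :=
  forall f, is_clf f -> forall e : R, 0 < e ->
    exists N : nat, forall n : nat, (N <= n)%N -> `|f (w n) - f p| < e.

Definition approx_fixed_point_seq (K : set psum) (T : psum -> psum)
  (w : nat -> psum) : Prop :=
  (forall n, K (w n)) /\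
  forall e : R, 0 < e ->
    exists N : nat, forall n : nat, (N <= n)%N -> psi_norm (psum_sub (T (w n)) (w n)) < e.

Definition conv (A : set psum) : set psum :=
  [set x | exists (n : nat) (c : 'I_n -> R) (a : 'I_n -> psum),
     [/\ (forall i, 0 <= c i), \sum_(i < n) c i = 1, (forall i, A (a i))
       & x = (fun j => \sum_(i < n) c i *: a i j)]].

(* Dset T w j = D_j^1 for j >= 1 :  D_1 = {w},
   D_{j+1} = conv (D_j U T(D_j)).  (Dset T w 0 = {w} is an unused convention.) *)
Fixpoint Dset (T : psum -> psum) (w : psum) (j : nat) : set psum :=
  match j with
  | j'.+1 => match j' with
             | 0 => [set w]
             | _ => conv (Dset T w j' `|` T @` Dset T w j')
             end
  | 0 => [set w]
  end.

End PsiSum.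

(* Main.v *)
Require Import Defs.
From HB Require Import structures.
From mathcomp Require Import all_boot all_order all_algebra.
From mathcomp Require Import all_classical all_reals all_analysis.
From mathcomp Require Import ring lra.
Import Order.TTheory GRing.Theory Num.Theory.
Import numFieldNormedType.Exports.
Local Open Scope classical_set_scope.
Local Open Scope ring_scope.

Section Aux.
Variable R : realType.
Variable m : nat.
Variable psi : ('I_m -> R) -> R.
Hypothesis Hpsi : is_norm_Rn psi.
Hypothesis Habs : absolute_norm psi.

Lemma psi0 : psi (fun _ => 0) = 0.
Proof.
case: Hpsi => _ _ Hh _.
have E : (fun _ : 'I_m => (0:R)) = (fun i => 0 * (fun _ : 'I_m => (0:R)) i).
  by apply: funext => i; rewrite mul0r.
by rewrite E Hh normr0 mul0r.
Qed.

Lemma psi_coord (v v' : 'I_m -> R) (j : 'I_m) :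
  (forall i, i != j -> v' i = v i) -> `|v' j| <= `|v j| -> psi v' <= psi v.
Proof.
move=> Hoth Hj; case: Hpsi => Hge _ Hh Htri.
have [vj0|vj0] := eqVneq (v j) 0.
  have -> : v' = v; last by [].
  apply: funext => i; case: (eqVneq i j) => [->|/Hoth //].
  by move: Hj; rewrite vj0 normr0 normr_le0 => /eqP ->.
pose v'' := fun i => if i == j then - v i else v i.
have E'' : psi v'' = psi v.
  rewrite Habs [psi v]Habs; congr psi; apply: funext => i; rewrite /v''.
  by case: ifP => _ //; rewrite normrN.
pose l := (1 + v' j / v j) / 2.
have Hl : 0 <= l <= 1.
  have : `|v' j / v j| <= 1.
    by rewrite normrM normrV ?unitfE // ler_pdivrMr ?normr_gt0 // mul1r.
  rewrite ler_norml => /andP[a b]; rewrite /l; apply/andP; split; lra.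
case/andP: Hl => l0 l1.
have Ev' : v' = (fun i => (fun i => l * v i) i + (fun i => (1 - l) * v'' i) i).
  apply: funext => i /=; rewrite /v''.
  case: (eqVneq i j) => [->|ne].
    rewrite /l; field; exact: vj0.
  by rewrite (Hoth _ ne); ring.
rewrite Ev'; apply: le_trans (Htri _ _) _.
rewrite !Hh E'' (ger0_norm l0) ger0_norm ?subr_ge0 //.
by rewrite -mulrDl addrC subrK mul1r.
Qed.

Lemma psi_mono (x y : 'I_m -> R) : (forall i, `|x i| <= `|y i|) -> psi x <= psi y.
Proof.
move=> Hxy.
pose z k := fun i : 'I_m => if (i < k)%N then x i else y i.
have Hz : forall k, psi (z k) <= psi y.
  elim=> [|k IH].
    have -> : z 0%N = y by apply: funext => i; rewrite /z ltn0.
    by [].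
  apply: le_trans IH; case: (ltnP k m) => km.
    apply: (@psi_coord _ _ (Ordinal km)).
      move=> i ne; rewrite /z ltnS leq_eqVlt.
      have -> : (val i == k) = false.
        apply/negbTE; apply: contra ne => /eqP e; apply/eqP; exact: val_inj.
      by [].
    by rewrite /z /= ltnS leqnn ltnn; exact: Hxy.
  have -> : z k.+1 = z k; last by [].
  apply: funext => i; rewrite /z.
  have h2 : (i < k)%N by apply: leq_trans (ltn_ord i) km.
  by rewrite h2 ltnS (ltnW h2).
have -> : x = z m by apply: funext => i; rewrite /z ltn_ord.
exact: Hz.
Qed.

Lemma psi_coord_le (Hn : normalized_norm psi) (x : 'I_m -> R) j :
  `|x j| <= psi x.
Proof.
case: Hpsi => _ _ Hh _.
rewrite Habs.
have E : psi (fun i => `|x j| * (if i == j then 1 else 0)) = `|x j|.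
  by rewrite Hh Hn normr_id mulr1.
rewrite -{1}E; apply: psi_mono => i.
by case: ifP => [/eqP->|_]; rewrite ?mulr1 ?mulr0 ?normr0 ?normr_id.
Qed.

Variable X : 'I_m -> normedModType R.

Lemma pn_add (x y : psum X) :
  psi_norm psi (psum_add x y) <= psi_norm psi x + psi_norm psi y.
Proof.
case: Hpsi => _ _ _ Htri.
rewrite /psi_norm /psum_add.
apply: le_trans (Htri (fun i => `|x i|) (fun i => `|y i|)).
apply: psi_mono => i.
by rewrite normr_id ger0_norm ?addr_ge0 //; exact: ler_normD.
Qed.

Lemma pn_scale a (x : psum X) :
  psi_norm psi (psum_scale a x) = `|a| * psi_norm psi x.
Proof.
case: Hpsi => _ _ Hh _.
rewrite /psi_norm /psum_scale; have := Hh `|a| (fun i => `|x i|); rewrite normr_id => <-; congr psi; apply: funext => i.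
by rewrite normrZ.
Qed.

Lemma pn_zero : psi_norm psi (psum_zero X) = 0.
Proof.
rewrite /psi_norm -psi0; congr psi; apply: funext => i.
by rewrite /psum_zero normr0.
Qed.

Lemma pn_sum n (c : 'I_n -> R) (a : 'I_n -> psum X) :
  psi_norm psi (fun j => \sum_(i < n) c i *: a i j)
    <= \sum_(i < n) `|c i| * psi_norm psi (a i).
Proof.
elim: n c a => [|n IH] c a.
  rewrite big_ord0.
  have -> : (fun j => \sum_(i < 0) c i *: a i j) = psum_zero X.
    by apply: functional_extensionality_dep => j; rewrite big_ord0.
  by rewrite pn_zero.
have -> : (fun j => \sum_(i < n.+1) c i *: a i j) =
  psum_add (fun j => \sum_(i < n) c (widen_ord (leqnSn n) i) *:
                     a (widen_ord (leqnSn n) i) j)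
           (psum_scale (c ord_max) (a ord_max)).
  by apply: functional_extensionality_dep => j; rewrite big_ord_recr.
rewrite big_ord_recr /=.
apply: le_trans (pn_add _ _) _.
rewrite pn_scale; apply: lerD => //; exact: IH.
Qed.

Lemma conv_closed (K : set (psum X)) (HK : psum_convex K) n
  (c : 'I_n -> R) (a : 'I_n -> psum X) :
  (forall i, 0 <= c i) -> \sum_(i < n) c i = 1 -> (forall i, K (a i)) ->
  K (fun j => \sum_(i < n) c i *: a i j).
Proof.
elim: n c a => [|n IH] c a c0 c1 aK.
  by move/eqP: c1; rewrite big_ord0 eq_sym oner_eq0.
rewrite big_ord_recr /= in c1.
have sge0 : 0 <= \sum_(i < n) c (widen_ord (leqnSn n) i) by apply: sumr_ge0.
case: (eqVneq (c ord_max) 1) => [e|ne].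
  have z : forall i : 'I_n, c (widen_ord (leqnSn n) i) = 0.
    have s0 : \sum_(i < n) c (widen_ord (leqnSn n) i) = 0.
      by move: c1; rewrite e; lra.
    move=> i; have := (@psumr_eq0P _ _ xpredT
      (fun i => c (widen_ord (leqnSn n) i)) (fun i _ => c0 _)).
    by apply; [exact: s0|].
  have -> : (fun j => \sum_(i < n.+1) c i *: a i j) = a ord_max; last exact: aK.
  apply: functional_extensionality_dep => j; rewrite big_ord_recr big1 ?add0r.
    by rewrite e scale1r; apply: add0r.
  by move=> i _; rewrite z scale0r.
set s := \sum_(i < n) c (widen_ord (leqnSn n) i) in c1 sge0.
have sne : s != 0.
  apply/eqP => s0; move: ne; rewrite -c1 s0 add0r eqxx //.
have s_gt0 : 0 < s by rewrite lt_def sne sge0.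
have cm0 := c0 ord_max.
have -> : (fun j => \sum_(i < n.+1) c i *: a i j) =
  psum_add (psum_scale s (fun j => \sum_(i < n) (c (widen_ord (leqnSn n) i) / s) *:
                     a (widen_ord (leqnSn n) i) j))
           (psum_scale (1 - s) (a ord_max)).
  apply: functional_extensionality_dep => j.
  rewrite big_ord_recr /psum_add /psum_scale scaler_sumr.
  have -> : 1 - s = c ord_max by rewrite -c1; ring.
  congr (_ + _); apply: eq_bigr => i _.
  by rewrite scalerA mulrC divfK.
apply: HK => //; last by rewrite -c1 lerDl.
apply: IH => //.
  by move=> i; rewrite divr_ge0.
by rewrite -mulr_suml -/s divff.
Qed.

End Aux.

Theorem lemma3p1 (R : realType) (r : nat)
  (X : 'I_r.+1 -> completeNormedModType R)
  (psi : ('I_r.+1 -> R) -> R)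
  (Hpsi : is_norm_Rn psi) (Habs : absolute_norm psi) (Hnorm : normalized_norm psi)
  (K : set (psum X)) (T : psum X -> psum X)
  (HTK : T @` K `<=` K)
  (HTne : nonexpansive_on psi K T)
  (HKc : weakly_compact psi K) (HKconv : psum_convex K)
  (HKmin : minimal_invariant psi K T)
  (HKdiam : diam_eq1 psi K)
  (w : nat -> psum X)
  (Hafp : approx_fixed_point_seq psi K T w)
  (Hw0 : weak_cvg psi w (psum_zero X)) (H0K : K (psum_zero X))
  (Hwr : forall e : R, 0 < e ->
     exists N : nat, forall n : nat, (N <= n)%N -> `|w n ord_max| < e)
  (eps1 : R) (Heps0 : 0 < eps1) (Heps1 : eps1 < 1)
  (k : nat) (Hk : (1 <= k)%N)
  (n1 : nat)
  (Hn1a : psi_norm psi (psum_sub (T (w n1)) (w n1)) < eps1)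
  (Hn1b : `|w n1 ord_max| < eps1) :
  forall u : psum X, Dset T (w n1) k u -> `|u ord_max| < k%:R * eps1.
Proof.
set w0 := w n1 in Hn1a Hn1b *.
set d := psi_norm psi (psum_sub (T w0) w0) in Hn1a.
have d0 : 0 <= d by case: Hpsi => H _ _ _; exact: H.
have Kw0 : K w0 by case: Hafp => H _; exact: H.
have claim : forall j u, Dset T w0 j.+1 u ->
    K u /\ psi_norm psi (psum_sub u w0) <= j%:R * d.
  elim=> [|j IH] u.
    move=> /= ->; split => //.
    have -> : psum_sub w0 w0 = psum_zero X.
      by apply: functional_extensionality_dep => i; rewrite /psum_sub subrr.
    by rewrite pn_zero // mul0r.
  move=> [n [c [a [c0 c1 aA ->]]]].
  have Ha : forall i, K (a i) /\ psi_norm psi (psum_sub (a i) w0) <= j.+1%:R * d.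
    move=> i; case: (aA i) => [/IH [Ka Hn]|[v /IH [Kv Hv] <-]].
      split => //; apply: le_trans Hn _; apply: ler_wpM2r => //.
      by rewrite ler_nat.
    split; first by apply: HTK; exists v.
    have -> : psum_sub (T v) w0 =
        psum_add (psum_sub (T v) (T w0)) (psum_sub (T w0) w0).
      apply: functional_extensionality_dep => i'.
      by rewrite /psum_add /psum_sub addrA subrK.
    apply: le_trans (@pn_add R _ psi Hpsi Habs (fun i => X i) _ _) _.
    rewrite -/d -natr1 mulrDl mul1r lerD2r.
    by apply: le_trans (HTne _ _ Kv Kw0) Hv.
  split.
    by apply: conv_closed => // i; case: (Ha i).
  have -> : psum_sub (fun j0 => \sum_(i < n) c i *: a i j0) w0 =
      (fun j0 => \sum_(i < n) c i *: psum_sub (a i) w0 j0).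
    apply: functional_extensionality_dep => i'.
    rewrite /psum_sub; symmetry; under eq_bigr do rewrite scalerBr.
    by rewrite sumrB -scaler_suml c1 scale1r.
  apply: le_trans (@pn_sum R _ psi Hpsi Habs (fun i => X i) _ _ _) _.
  apply: (@le_trans _ _ (\sum_(i < n) c i * (j.+1%:R * d))).
    apply: ler_sum => i _; rewrite ger0_norm //.
    by apply: ler_wpM2l => //; case: (Ha i).
  by rewrite -mulr_suml c1 mul1r.
case: k Hk => // j _ u /claim [_ Hu].
have Hc : `|psum_sub u w0 ord_max| <= psi_norm psi (psum_sub u w0).
  have := @psi_coord_le R _ psi Hpsi Habs Hnorm (fun i => `|psum_sub u w0 i|) ord_max.
  by rewrite normr_id.
have -> : u ord_max = w0 ord_max + psum_sub u w0 ord_max.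
  by rewrite /psum_sub addrC subrK.
apply: le_lt_trans (ler_normD _ _) _.
have Hd : j%:R * d <= j%:R * eps1 by apply: ler_wpM2l => //; exact: ltW.
rewrite -natr1 mulrDl mul1r [X in _ < X]addrC.
apply: ltr_leD Hn1b _.
exact: le_trans Hc (le_trans Hu Hd).
Qed.
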